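(* Let $e\geq 2$, $N$ cyclic of order $2^e$, $G$ any subgroup of $\mathrm{Hol}(N)$, $H$ any subgroup of $G$ of index $2^e$, and $C=\mathrm{Core}_G(H)$. If $|H\cap N|\geq 4$, then $G/C$ is not isomorphic to any transitive subgroup of $\mathrm{Hol}(N)$.
   Context: $\mathrm{Hol}(N)=N\rtimes\mathrm{Aut}(N)$ acts on $N$ by $(\eta,\alpha)\cdot x=\eta\,\alpha(x)$, with $N$ identified with a normal subgroup of it; a subgroup is transitive if it acts transitively on $N$. $\mathrm{Core}_G(H)$ is the largest normal subgroup of $G$ contained in $H$. *)

(* Defs.v *)
From mathcomp Require Import all_boot all_fingroup all_solvable.
Set Implicit Arguments. Unset Strict Implicit. Unset Printing Implicit Defensive.
Local Open Scope group_scope.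

(* The group N is the whole finGroupType gT, i.e. N = [set: gT].
   Hol(N) is realised as a permutation group on the points of N:
   it is generated by the left translations x |-> eta * x (eta in N)
   and the automorphisms Aut(N); the action is the natural one 'P,
   i.e. (eta, alpha) . x = eta * alpha(x). *)

Definition transl (gT : finGroupType) (b : gT) : {perm gT} := perm (mulgI b).

Definition HolN (gT : finGroupType) : {set {perm gT}} :=
  [set transl b | b : gT].

Definition Hol (gT : finGroupType) : {set {perm gT}} :=
  <<HolN gT :|: Aut [set: gT]>>.

Definition transitive_sub (gT : finGroupType) (T : {set {perm gT}}) : bool :=
  [transitive T, on [set: gT] | 'P].

(* Main.v *)
Require Import Defs.
From mathcomp Require Import all_boot all_fingroup all_solvable.
From mathcomp Require Import zify.
Set Implicit Arguments. Unset Strict Implicit. Unset Printing Implicit Defensive.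
Fixpoint Ssum (m j : nat) : nat := if j is j'.+1 then 1 + m * Ssum m j' else 0.
Lemma Ssum_add m a n : Ssum m (a + n) = Ssum m n + m ^ n * Ssum m a.
Proof.
elim: n => [|n IH]; first by rewrite addn0 /= expn0 mul1n.
rewrite addnS /= IH expnS; nia.
Qed.

Lemma Ssum_double m j : Ssum m (2 ^ j.+1) = Ssum m (2 ^ j) * (1 + m ^ (2 ^ j)).
Proof. rewrite expnS mul2n -addnn Ssum_add; nia. Qed.

Lemma Ssum_dvd m j : odd m -> 2 ^ j %| Ssum m (2 ^ j).
Proof.
move=> om; elim: j => [|j IH]; first by rewrite expn0 dvd1n.
rewrite Ssum_double expnS mulnC dvdn_mul //.
by rewrite dvdn2 /= oddX om orbT.
Qed.

Lemma Ssum_exact m j : m %% 4 = 1 -> exists2 o, odd o & Ssum m (2 ^ j) = 2 ^ j * o.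
Proof.
move=> m4; elim: j => [|j [o oo IH]]; first by exists 1; rewrite ?expn0 /= ?muln0.
have h4: (m ^ (2 ^ j)) %% 4 = 1 by rewrite -modnXm m4 exp1n.
have [u hu]: exists u, m ^ (2 ^ j) = 4 * u + 1.
  by exists (m ^ (2 ^ j) %/ 4); rewrite {1}(divn_eq (m ^ (2 ^ j)) 4) h4 mulnC.
exists (o * (2 * u + 1)); first by rewrite oddM oo /= oddD oddM.
rewrite Ssum_double IH hu expnS; nia.
Qed.

Lemma sq_odd_mod8 m : odd m -> 8 %| m ^ 2 - 1.
Proof.
move=> om.
have: m ^ 2 = 1 %[mod 8].
  rewrite -modnXm. have : m %% 8 < 8 by rewrite ltn_mod.
  have : odd (m %% 8) by rewrite odd_mod.
  by case: (m %% 8) => [|[|[|[|[|[|[|[|]]]]]]]].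
move/eqP; rewrite eqn_mod_dvd //; rewrite expn_gt0; by case: m om.
Qed.

Lemma pow_odd m j : odd m -> 2 ^ j.+3 %| m ^ (2 ^ j.+1) - 1.
Proof.
move=> om; elim: j => [|j IH]; first by rewrite expn1 sq_odd_mod8.
rewrite (expnS 2 j.+1) mulnC expnM.
have -> : (m ^ 2 ^ j.+1) ^ 2 - 1 = (m ^ 2 ^ j.+1) ^ 2 - 1 ^ 2 by rewrite exp1n.
rewrite subn_sqr expnS mulnC dvdn_mul //.
by rewrite dvdn2 oddD oddX om orbT.
Qed.

Local Open Scope group_scope.


Lemma translE (gT : finGroupType) (b x : gT) : transl b x = b * x.
Proof. by rewrite /transl permE. Qed.

Lemma transl_inj (gT : finGroupType) : injective (@transl gT).
Proof. by move=> a b /(congr1 (fun p : {perm gT} => p 1)); rewrite !translE !mulg1. Qed.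

Lemma translM (gT : finGroupType) (a b : gT) : transl a * transl b = transl (b * a).
Proof. by apply/permP => x; rewrite permM !translE mulgA. Qed.

Lemma transl1 (gT : finGroupType) : transl (1 : gT) = 1.
Proof. by apply/permP => x; rewrite translE perm1 mul1g. Qed.

Section Aff.
Variables (gT : finGroupType) (z : gT).
Hypothesis genz : [set: gT] = <[z]>.

Lemma comm_all (x y : gT) : commute x y.
Proof.
have /cycleP[i ->] : x \in <[z]> by rewrite -genz inE.
have /cycleP[j ->] : y \in <[z]> by rewrite -genz inE.
exact: commuteX2.
Qed.

Definition affine (p : {perm gT}) b m := forall x, p x = b * x ^+ m.

Definition AffS : {set {perm gT}} :=
  [set p : {perm gT} | [exists b : gT, exists m : 'I_#|gT|, [forall x, p x == b * x ^+ m]]].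

Lemma expg_modT (x : gT) m : x ^+ (m %% #|gT|) = x ^+ m.
Proof. by apply: expg_mod; rewrite -cardsT expg_cardG ?inE. Qed.

Lemma affP p : reflect (exists b m, affine p b m) (p \in AffS).
Proof.
apply: (iffP idP).
  by rewrite inE => /existsP[b /existsP[m /forallP H]]; exists b, m => x; apply/eqP.
case=> b [m H]; rewrite inE; apply/existsP; exists b; apply/existsP.
have lt: m %% #|gT| < #|gT| by rewrite ltn_mod -cardsT (cardG_gt0 [set: gT]).
exists (Ordinal lt); apply/forallP => x /=; by rewrite expg_modT H.
Qed.

Lemma aff_mul p q b m c n : affine p b m -> affine q c n ->
  affine (p * q) (c * b ^+ n) (m * n).
Proof.
move=> hp hq x; rewrite permM hp hq (expgMn _ (comm_all _ _)) (expgM x m n).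
by rewrite mulgA.
Qed.

Lemma aff_exp p b m j : affine p b m -> affine (p ^+ j) (b ^+ Ssum m j) (m ^ j).
Proof.
move=> hp; elim: j => [|j IH] x.
  by rewrite expg0 perm1 /= expg0 expn0 expg1 mul1g.
rewrite expgSr permM IH hp (expgMn _ (comm_all _ _)) -!expgM mulgA -expgS /=.
by rewrite expnSr mulnC (mulnC m).
Qed.

Lemma Aff_group_set : group_set AffS.
Proof.
apply/andP; split.
  by apply/affP; exists 1, 1%N => x; rewrite perm1 mul1g expg1.
apply/subsetP => r /mulsgP[p q /affP[b [m hp]] /affP[c [n hq]] ->].
by apply/affP; exists (c * b ^+ n), (m * n)%N; apply: aff_mul.
Qed.

Canonical Aff_group := Group Aff_group_set.

Lemma Hol_Aff : Hol gT \subset AffS.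
Proof.
rewrite /Hol gen_subG; apply/subsetP => p /setUP[/imsetP[b _ ->]|Ap].
  by apply/affP; exists b, 1%N => x; rewrite translE expg1.
have mA := Aut_morphic Ap.
have /cycleP[m hm] : p z \in <[z]> by rewrite -genz inE.
have hX i : p (z ^+ i) = p z ^+ i.
  elim: i => [|i IH].
    have e1 := morphicP mA 1 1 (in_setT _) (in_setT _); rewrite mulg1 in e1.
    by rewrite !expg0; apply: (mulgI (p 1)); rewrite mulg1 -e1.
  by rewrite expgSr (morphicP mA) ?in_setT // IH -expgSr.
apply/affP; exists 1, m => x; rewrite mul1g.
have /cycleP[i ->] : x \in <[z]> by rewrite -genz inE.
by rewrite hX hm -!expgM mulnC.
Qed.


Variable e : nat.
Hypothesis he : 2 <= e.
Hypothesis oz : #[z] = (2 ^ e)%N.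

Lemma cardT : #|gT| = (2 ^ e)%N.
Proof. by rewrite -cardsT genz. Qed.

Lemma ordx (x : gT) : x ^+ (2 ^ e) = 1.
Proof. by rewrite -cardT -cardsT expg_cardG ?inE. Qed.

Lemma zX1 k : (z ^+ k == 1) = (2 ^ e %| k).
Proof. by rewrite -order_dvdn oz. Qed.

Lemma e_split : (2 ^ e = 2 ^ (e - 2) * 4)%N.
Proof. by rewrite -(expnD 2 (e-2) 2) subnK. Qed.

Lemma aff_odd p b m : affine p b m -> odd m.
Proof.
move=> hp; apply/negPn/negP => em.
have [m' hm'] : exists m', m = (2 * m')%N.
  by exists m./2; rewrite -{1}(odd_double_half m) (negbTE em) add0n -muln2 mulnC.
pose y := z ^+ (2 ^ (e - 1)).
have ey : (2 ^ e = 2 ^ (e - 1) * 2)%N by rewrite -expnSr (_ : (e - 1).+1 = e) //; lia.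
have y1 : y ^+ m = 1.
  by apply/eqP; rewrite /y -expgM zX1 hm' mulnA ey dvdn_mulr.
have : p y = p 1 by rewrite !hp y1 expg1n.
move/perm_inj/eqP; rewrite /y zX1 => /dvdn_leq.
rewrite expn_gt0 /= => /(_ isT); rewrite leq_exp2l //; lia.
Qed.

Lemma powA p b m : 3 <= e -> affine p b m ->
  p ^+ (2 ^ (e - 2)) = transl (b ^+ Ssum m (2 ^ (e - 2))) /\
  (b ^+ Ssum m (2 ^ (e - 2))) ^+ 4 = 1.
Proof.
move=> he3 hp; have om := aff_odd hp.
have := pow_odd (e - 3) om.
have -> : (e - 3).+3 = e by lia.
have -> : (e - 3).+1 = (e - 2)%N by lia.
move=> hdv; split.
  apply/permP => x; rewrite translE (aff_exp _ hp).
  have m1 : 0 < m ^ 2 ^ (e - 2) by rewrite expn_gt0; case: (m) om.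
  rewrite -(subnK m1) expgD expg1.
  have -> : x ^+ (m ^ 2 ^ (e - 2) - 1) = 1.
    by apply/eqP; rewrite -order_dvdn; apply: dvdn_trans hdv; rewrite -cardT -cardsT order_dvdG ?inE.
  by rewrite mul1g.
have := Ssum_dvd (e - 2) om; case/dvdnP => s ->.
by rewrite -expgM -mulnA -e_split mulnC expgM ordx expg1n.
Qed.

Lemma nondiv k o : odd o -> odd k || (k == 2%N) -> ~~ (2 ^ e %| k * (2 ^ (e - 2) * o)).
Proof.
move=> oo /orP[ok|/eqP->]; apply/negP.
  rewrite Gauss_dvdr; last by rewrite coprimeXl // coprime2n.
  rewrite e_split dvdn_pmul2l ?expn_gt0 // => h4.
  by have := dvdn_trans (isT : 2 %| 4) h4; rewrite dvdn2 oo.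
rewrite mulnCA e_split dvdn_pmul2l ?expn_gt0 // (_ : 4 = 2 * 2)%N //.
rewrite dvdn_pmul2l // dvdn2 oo //.
Qed.

Lemma mod4 a : odd a -> (a %% 4 = 1 \/ a %% 4 = 3)%N.
Proof.
move=> oa; have : (a %% 4 < 4) by rewrite ltn_mod.
have : odd (a %% 4) by rewrite odd_mod.
by case: (a %% 4) => [|[|[|[|]]]] //; auto.
Qed.

Lemma pow_ne1 p k m : affine p (z ^+ k) m -> (m %% 4 = 1)%N -> odd k || (k == 2%N) ->
  p ^+ (2 ^ (e - 2)) != 1.
Proof.
move=> hp m4 hk; apply/eqP => h1.
have := congr1 (fun q : {perm gT} => q 1) h1.
rewrite perm1 (aff_exp _ hp) expg1n mulg1 -expgM => /eqP.
rewrite zX1; have [o oo ->] := Ssum_exact (e - 2) m4.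
by rewrite (negbTE (nondiv oo hk)).
Qed.

Lemma transC (T : {group {perm gT}}) : T \subset AffS -> transitive_sub T ->
  exists2 t, t \in T & t ^+ (2 ^ (e - 2)) != 1.
Proof.
move=> TA tT.
have orb := @atransP _ _ _ _ _ tT (1 : gT) (in_setT _).
have getp y : exists2 p, p \in T & p 1 = y.
  have : y \in orbit 'P T 1 by rewrite orb inE.
  by case/orbitP => p Tp <-; exists p.
have aff p : p \in T -> exists m, affine p (p 1) m.
  move=> Tp; have /affP[b [m hp]] := subsetP TA p Tp; exists m.
  by have := hp 1; rewrite expg1n mulg1 => ->.
have [t Tt t1] := getp (z ^+ 1); have [a ha] := aff t Tt; rewrite t1 in ha.
have [a1|a3] := mod4 (aff_odd ha).
  by exists t => //; apply: (pow_ne1 ha).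
have [s Ts s1] := getp (z ^+ 2); have [c hc] := aff s Ts; rewrite s1 in hc.
have [c1|c3] := mod4 (aff_odd hc).
  by exists s => //; apply: (pow_ne1 hc).
exists (t * s); first by rewrite groupM.
have h := aff_mul ha hc; rewrite -expgM -expgD in h.
apply: (pow_ne1 h).
  by rewrite -modnMm a3 c3.
by rewrite oddD mul1n (aff_odd hc).
Qed.

Definition Kset (H : {set {perm gT}}) := [set c : gT | transl c \in H].

Lemma K_group_set (H : {group {perm gT}}) : group_set (Kset H).
Proof.
apply/andP; split; first by rewrite inE transl1 group1.
apply/subsetP => r /mulsgP[a c]; rewrite !inE => Ha Hc ->.
by rewrite -translM groupM.
Qed.

Canonical K_group H := Group (K_group_set H).

Lemma lemB (H : {group {perm gT}}) : 4 <= #|H :&: HolN gT| ->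
  forall c : gT, c ^+ 4 = 1 -> transl c \in H.
Proof.
move=> H4 c c4.
have eK : H :&: HolN gT = (@transl gT) @: Kset H.
  apply/setP => p; apply/setIP/imsetP => [[Hp /imsetP[b _ pb]]|[b]].
    by exists b => //; rewrite inE -pb.
  by rewrite inE => Hb ->; split=> //; apply/imsetP; exists b.
rewrite eK card_imset in H4; last exact: transl_inj.
have dv : #|K_group H| %| 2 ^ e by rewrite -cardT -cardsT cardSg ?subsetT.
have /(dvdn_pfactor _ _ (isT : prime 2)) [f fe df] := dv.
have f2 : 2 <= f.
  move: H4; rewrite /= df (_ : 4 = 2 ^ 2)%N // leq_exp2l //.
have : K_group H \in [set X : {group gT} | X \subset <[z]> & #|X| == (2 ^ f)%N].
  by rewrite inE -genz subsetT /= df eqxx.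
rewrite cycle_sub_group; last by rewrite oz -df.
rewrite in_set1 oz -expnB // => /eqP KE.
have /cycleP[i ci] : c \in <[z]> by rewrite -genz inE.
have : 2 ^ e %| i * 4.
  by rewrite -zX1 expgM -ci c4.
rewrite (_ : 2 ^ e = 2 ^ (e - f) * 2 ^ f)%N; last by rewrite -expnD subnK.
move=> h; have : 2 ^ (e - f) * 4 %| i * 4.
  apply: dvdn_trans h; rewrite dvdn_pmul2l ?expn_gt0 //.
  by rewrite (_ : 4 = 2 ^ 2)%N // dvdn_exp2l.
rewrite dvdn_pmul2r // => /dvdnP[q iq].
have : c \in K_group H by rewrite KE ci iq mulnC expgM groupX ?cycle_id.
by rewrite inE.
Qed.

End Aff.

Lemma HolN_group_set (gT : finGroupType) : group_set (HolN gT).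
Proof.
apply/andP; split; first by apply/imsetP; exists 1; rewrite ?transl1.
apply/subsetP => r /mulsgP[p q /imsetP[a _ ->] /imsetP[b _ ->] ->].
by rewrite translM; apply/imsetP; exists (b * a).
Qed.

Canonical HolN_group gT := Group (HolN_group_set gT).

Unset Implicit Arguments.
Set Strict Implicit.

Theorem proposition5p4 (gT : finGroupType) (e : nat) (he : 2 <= e)
  (Ncyc : cyclic [set: gT]) (Nord : #|gT| = (2 ^ e)%N)
  (G H : {group {perm gT}})
  (GHol : G \subset Hol gT) (HG : H \subset G) (idx : #|G : H| = (2 ^ e)%N)
  (HN4 : 4 <= #|H :&: HolN gT|) :
  ~ exists T : {group {perm gT}},
      [/\ T \subset Hol gT, transitive_sub T & G / gcore H G \isog T].
Proof.
case=> T [THol tT iso].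
have [z genz] := cyclicP Ncyc.
have oz : #[z] = (2 ^ e)%N by rewrite -Nord -cardsT genz.
have GA := subset_trans GHol (Hol_Aff genz).
have TA := subset_trans THol (Hol_Aff genz).
have [t Tt tn] := transC genz he oz TA tT.
have [e2|e3] := leqP e 2.
  have ee : e = 2%N by apply/eqP; rewrite eqn_leq e2 he.
  rewrite ee in Nord idx.
  have c4 : #|H :&: HolN gT| = 4%N.
    apply/eqP; rewrite eqn_leq HN4 andbT.
    apply: leq_trans (subset_leq_card (subsetIr _ _)) _.
    apply: leq_trans (leq_imset_card _ _) _; rewrite ?cardsT ?cardT Nord //.
  have d4 : 4 %| #|H| by rewrite -c4 cardSg ?subsetIl.
  have d16 : 16 %| #|G| by rewrite -(Lagrange HG) idx (_ : 16 = 4 * 4)%N // dvdn_mul.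
  have d24 : #|G| %| 24.
    have -> : 24 = #|perm_on [set: gT]| by rewrite card_perm cardsT Nord.
    have <- : #|[set: {perm gT}]| = #|perm_on [set: gT]|.
      by rewrite cardsT; apply: eq_card => s; rewrite inE unfold_in; symmetry; apply/subsetP => x _; rewrite inE.
    exact (cardSg (subsetT G)).
  by have := dvdn_trans d16 d24.
have key g : g \in AffS gT -> g ^+ (2 ^ (e - 2)) \in H.
  case/affP => b [m hp]; have [-> c4] := powA genz he oz e3 hp.
  exact (lemB genz oz HN4 c4).
have expC : exponent (G / gcore H G) %| 2 ^ (e - 2).
  apply/exponentP => u /morphimP[g Ng Gg ->].
  rewrite -morphX // /= coset_id //.
  apply/bigcapP => x Gx; rewrite mem_conjg conjXg; apply: key.
  by apply: (subsetP GA); rewrite groupJ ?groupV.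
rewrite (exponent_isog iso) in expC.
by move/exponentP: expC => /(_ t Tt) /eqP; rewrite (negbTE tn).
Qed.
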